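(* Let $e\in\mathcal{PA}_n$ with $\mathrm{asc}(e)=k$. Then $e$ avoids the pattern $\underline{12}0$ if and only if its tail sequence $\mathbf{t}(e)$, which is an element of $\mathbf{I}_{k+1}$, is non-decreasing.
   Context: An inversion sequence of length $n$ is an integer sequence $e=e_1\ldots e_n$ with $0\leq e_i<i$; their set is $\mathbf{I}_n$. $\mathrm{asc}(e_1\ldots e_i)=|\{\ell\in[i-1]:e_\ell<e_{\ell+1}\}|$. An ascent sequence is an $e\in\mathbf{I}_n$ with $e_{i+1}\leq\mathrm{asc}(e_1\ldots e_i)+1$ for all $1\le i<n$. It is primitive if $e_i\neq e_{i+1}$ for all $i\in[n-1]$; $\mathcal{PA}_n$ denotes the set of primitive ascent sequences of length $n$. For a primitive ascent sequence $e$, partition $e$ uniquely into maximal strictly decreasing consecutive blocks called runs (e.g. $0102324325=0/10/2/32/432/5$); the tail sequence $\mathbf{t}(e)$ is the sequence of least (i.e. last) entries of the runs, in order (e.g. $002225$). A sequence $e$ avoids $\underline{12}0$ if there are no indices $2\leq i<j\leq n$ with $e_j<e_{i-1}<e_i$. *)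

(* Defs.v *)
(* Sequences are 0-indexed: position i (0-based) holds e_{i+1}. *)
From mathcomp Require Import all_boot.
Set Implicit Arguments. Unset Strict Implicit. Unset Printing Implicit Defensive.

(* e in I_n : size n and e_i < i (1-based), i.e. nth 0 e i <= i (0-based). *)
Definition inversion_seq (n : nat) (e : seq nat) : Prop :=
  size e = n /\ forall i, i < n -> nth 0 e i < i.+1.

Definition asc (s : seq nat) : nat :=
  count (fun l => nth 0 s l < nth 0 s l.+1) (iota 0 (size s).-1).

Definition ascent_seq (n : nat) (e : seq nat) : Prop :=
  inversion_seq n e /\
  forall i, 1 <= i < n -> nth 0 e i <= (asc (take i e)).+1.

Definition primitive (e : seq nat) : Prop :=
  forall i, i.+1 < size e -> nth 0 e i != nth 0 e i.+1.

Definition primitive_ascent (n : nat) (e : seq nat) : Prop :=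
  ascent_seq n e /\ primitive e.

(* decomposition into maximal strictly decreasing consecutive blocks *)
Fixpoint runs (s : seq nat) : seq (seq nat) :=
  match s with
  | [::] => [::]
  | x :: s' =>
      match runs s' with
      | (y :: r) :: rs => if y < x then (x :: y :: r) :: rs
                          else [:: x] :: (y :: r) :: rs
      | rs => [:: x] :: rs
      end
  end.

Definition tail_seq (e : seq nat) : seq nat := map (last 0) (runs e).

(* avoidance of the vincular pattern 12_0 (underlined 12):
   no 2 <= i < j <= n (1-based) with e_j < e_{i-1} < e_i.
   0-based: no 1 <= i < j < size e with e[j] < e[i-1] < e[i]. *)
Definition avoids_u12_0 (e : seq nat) : Prop :=
  ~ exists i j, [/\ 1 <= i, i < j, j < size e &
                    nth 0 e j < nth 0 e i.-1 < nth 0 e i].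

Example runs_ex : runs [:: 0;1;0;2;3;2;4;3;2;5] =
  [:: [:: 0]; [:: 1;0]; [:: 2]; [:: 3;2]; [:: 4;3;2]; [:: 5]].
Proof. by []. Qed.
Example tail_ex : tail_seq [:: 0;1;0;2;3;2;4;3;2;5] = [:: 0;0;2;2;2;5].
Proof. by []. Qed.

(* Main.v *)
Require Import Defs.
From mathcomp Require Import all_boot.

Fixpoint av (s : seq nat) : bool :=
  match s with
  | x :: ((y :: s') as t) => av t && ((x < y) ==> all (leq x) s')
  | _ => true
  end.

Definition pat (e : seq nat) : Prop :=
  exists i j, [/\ 1 <= i, i < j, j < size e &
                    nth 0 e j < nth 0 e i.-1 < nth 0 e i].

Lemma pat_nil : ~ pat [::].
Proof. by case=> i [j [_ _]]. Qed.

Lemma pat_one x : ~ pat [:: x].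
Proof. case=> i [j [H1 H2 H3 _]]. move: H3; rewrite /= ltnS leqn0 => /eqP Hj.
by rewrite Hj in H2. Qed.

Lemma pat_cons x y s : pat [:: x, y & s] <->
  pat (y :: s) \/ (x < y /\ exists2 z, z \in s & z < x).
Proof.
split.
- case=> i [j [H1 H2 H3 H4]].
  case: i H1 H2 H4 => [|[|i]] //= H1 H2 H4.
  + right. case: j H2 H3 H4 => [|[|j]] //= _ H3 /andP [Hz Hxy].
    split => //. exists (nth 0 s j) => //. apply: mem_nth. by rewrite -2!ltnS.
  + left. case: j H2 H3 H4 => [|j] //= H2 H3 H4.
    exists i.+1, j; split => //.
- case=> [[i [j [H1 H2 H3 H4]]]|[Hxy [z Hz Hzx]]].
  + exists i.+1, j.+1; split => //.
    move: H4; case: i H1 {H2} => [|i] //=.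
  + exists 1, (index z s).+2; split => //=.
    * by rewrite !ltnS index_mem.
    * by rewrite nth_index // Hzx Hxy.
Qed.

Lemma avP e : avoids_u12_0 e <-> av e.
Proof.
rewrite /avoids_u12_0 -/(pat e).
elim: e => [|x [|y s] IH].
- by split => // _; apply: pat_nil.
- by split => // _; apply: pat_one.
- have PC := pat_cons x y s. rewrite /=. split.
  + move=> H. apply/andP; split.
    * apply/IH => Hp. by apply: H; apply/PC; left.
    * apply/implyP => Hxy. apply/allP => z Hz. rewrite leqNgt; apply/negP => Hzx.
      by apply: H; apply/PC; right; split => //; exists z.
  + move=> /andP [Ha Hb] /PC [Hp|[Hxy [z Hz Hzx]]].
    * by move/IH: Ha; apply.
    * move: Hb; rewrite Hxy /= => /allP /(_ z Hz). by rewrite leqNgt Hzx.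
Qed.

Lemma runs_cons_eq x s : runs (x :: s) =
  match runs s with
  | (y :: r) :: rs => if y < x then (x :: y :: r) :: rs
                      else [:: x] :: (y :: r) :: rs
  | rs => [:: x] :: rs
  end.
Proof. by []. Qed.

Lemma runs_cons y s : exists r rs, runs (y :: s) = (y :: r) :: rs.
Proof.
rewrite runs_cons_eq. case: (runs s) => [|[|z r] rs]; try by do 2 eexists.
case: ifP => _; by do 2 eexists.
Qed.

Lemma tail2 x y s : tail_seq [:: x, y & s] =
  if y < x then tail_seq (y :: s) else x :: tail_seq (y :: s).
Proof.
have [r [rs E]] := runs_cons y s.
rewrite /tail_seq runs_cons_eq E. by case: ifP.
Qed.

Lemma tail1 x : tail_seq [:: x] = [:: x].
Proof. by []. Qed.

Lemma tail_sub s : {subset tail_seq s <= s}.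
Proof.
elim: s => [|x [|y s] IH] //.
move=> z; rewrite tail2; case: ifP => _.
- by move/IH => H; rewrite in_cons H orbT.
- rewrite in_cons => /orP [/eqP ->|/IH H]; first by rewrite mem_head.
  by rewrite in_cons H orbT.
Qed.

Lemma tail_low s z : z \in s -> exists2 t, t \in tail_seq s & t <= z.
Proof.
elim: s z => [|x [|y s] IH] z //.
- by rewrite mem_seq1 => /eqP ->; exists x; rewrite ?mem_seq1.
- rewrite tail2 in_cons => /orP [/eqP ->|Hz]; case: ifP => Hyx.
  + have [t Ht Hty] := IH y (mem_head _ _). exists t => //.
    by apply: leq_trans Hty (ltnW Hyx).
  + by exists x; rewrite ?mem_head.
  + exact: IH.
  + have [t Ht Htz] := IH z Hz. exists t => //. by rewrite in_cons Ht orbT.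
Qed.

Lemma all_tail x s : all (leq x) (tail_seq s) = all (leq x) s.
Proof.
apply/allP/allP => H z Hz.
- have [t Ht Htz] := tail_low _ _ Hz. exact: leq_trans (H t Ht) Htz.
- apply: H; move: Hz; apply: tail_sub.
Qed.

Lemma key e : primitive e -> av e = sorted leq (tail_seq e).
Proof.
elim: e => [|x [|y s] IH] Hp //.
have Hxy : x != y by apply: (Hp 0).
have Hp' : primitive (y :: s) by move=> i Hi; apply: (Hp i.+1).
have -> : av [:: x, y & s] = av (y :: s) && ((x < y) ==> all (leq x) s) by [].
rewrite tail2 (IH Hp'). case: ifP => Hyx.
- by rewrite ltnNge (ltnW Hyx) /= andbT.
- have Hlt : x < y by rewrite ltn_neqAle Hxy leqNgt Hyx.
  rewrite Hlt /= (path_sortedE leq_trans) all_tail /= (ltnW Hlt) /=.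
  by rewrite andbC.
Qed.

Theorem lemma2p1 (n k : nat) (e : seq nat) :
  primitive_ascent n e -> asc e = k ->
  (avoids_u12_0 e <-> sorted leq (tail_seq e)).
Proof.
move=> [_ Hp] _. rewrite -key //. exact: avP.
Qed.
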